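(* Let $r\ge 0$ and $k\ge r$ be integers and let $t$ be an integer with $2\le t\le r+1$. Let $\Omega=\lfloor tr/(t-1)\rfloor+1$, $a=t(r+1)+(1-t)\Omega$, $b=t-1-a$. Then \[t\binom{k+2-(r+1)}{2}-b\binom{k+2-\Omega}{2}-a\binom{k+2-(\Omega+1)}{2}=\binom{k+2}{2}-\binom{r+2}{2}-\sum_{j=1}^{k-r}(r+j+1-j\,t)_+ .\]
   Context: $(x)_+=\max(x,0)$; an empty sum is $0$. Binomial coefficients follow the convention $\binom{m}{2}=m(m-1)/2$ for integers $m\ge 2$ and $\binom{m}{2}=0$ for $m<2$. *)

(* Defs.v *)
From mathcomp Require Import all_boot all_order all_algebra.
Set Implicit Arguments. Unset Strict Implicit. Unset Printing Implicit Defensive.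
Import Order.TTheory GRing.Theory Num.Theory.
Local Open Scope ring_scope.

Definition binom2 (m : int) : int :=
  if (0 <= m) then ('C(`|m|%N, 2))%:Z else 0.

Definition pos_part (x : int) : int := Num.max x 0.

(* Main.v *)
Require Import Defs.
From mathcomp Require Import all_boot all_order all_algebra zify ring.
Import Order.TTheory GRing.Theory Num.Theory.
Local Open Scope ring_scope.

Lemma pp_pos (x : int) : 0 <= x -> pos_part x = x.
Proof. by move=> h; rewrite /pos_part max_l. Qed.
Lemma pp_neg (x : int) : x <= 0 -> pos_part x = 0.
Proof. by move=> h; rewrite /pos_part max_r. Qed.

Lemma binom2S (m : int) : binom2 (m + 1) = binom2 m + pos_part m.
Proof.
case: m => [n|n].
  rewrite pp_pos // /binom2 /= -PoszD addn1 /= binS bin1.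
  by rewrite PoszD addrC.
rewrite pp_neg // /binom2.
by case: n.
Qed.

Lemma binom2_le1 (m : int) : m <= 1 -> binom2 m = 0.
Proof.
rewrite /binom2; case: m => [n|n] //= h.
by case: n h => [|[|n]].
Qed.

Lemma comb (T B1 B2 B3 B4 B5 S P1 P2 P3 P4 P5 b a : int) :
  T*B1 - b*B2 - a*B3 = B4 - B5 - S -> T*P1 - b*P2 - a*P3 = P4 - P5 ->
  T*(B1+P1) - b*(B2+P2) - a*(B3+P3) = (B4+P4) - B5 - (S+P5).
Proof. move=> h1 h2; apply/eqP; rewrite -subr_eq0.
have -> : T*(B1+P1) - b*(B2+P2) - a*(B3+P3) - ((B4+P4) - B5 - (S+P5))
  = (T*B1 - b*B2 - a*B3 - (B4 - B5 - S)) + (T*P1 - b*P2 - a*P3 - (P4 - P5)) by ring.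
by rewrite h1 h2 !subrr.
Qed.

Theorem lemma4p4 (r k t : nat) (hrk : (r <= k)%N) (ht2 : (2 <= t)%N)
  (htr : (t <= r.+1)%N) :
  let Omega : int := ((t * r) %/ (t - 1))%N.+1%:Z in
  let a : int := (t%:Z) * (r%:Z + 1) + (1 - t%:Z) * Omega in
  let b : int := t%:Z - 1 - a in
  (t%:Z) * binom2 (k%:Z + 2 - (r%:Z + 1)) - b * binom2 (k%:Z + 2 - Omega)
    - a * binom2 (k%:Z + 2 - (Omega + 1))
  = binom2 (k%:Z + 2) - binom2 (r%:Z + 2)
    - \sum_(1 <= j < (k - r).+1) pos_part (r%:Z + j%:Z + 1 - j%:Z * t%:Z).
Proof.
move=> Omega a b.
set s := (t - 1)%N.
have hs : (0 < s)%N by rewrite /s; lia.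
set q := (r %/ s)%N. set rr := (r %% s)%N.
have hr : r = (q * s + rr)%N by rewrite /q /rr -divn_eq.
have hrr : (rr < s)%N by rewrite /rr ltn_pmod.
have hts : t = s.+1 by rewrite /s; lia.
have hO : Omega = (r + q + 1)%:Z.
  have hd : ((t * r) %/ (t - 1))%N = (r %/ s + r)%N.
    by rewrite -/s hts mulSn divnDr ?dvdn_mulr // mulKn.
  rewrite /Omega hd /q; lia.
have ha : a = (rr + 1)%:Z by rewrite /a hO hts; lia.
have hb : b = (s - rr - 1)%:Z by rewrite /b ha hts; lia.
clearbody Omega a b. rewrite {}hO {}ha {}hb.
have -> : k = (r + (k - r))%N by lia.
rewrite addKn. elim: (k - r)%N => [|n IH].
  rewrite big_geq // addn0 subr0 subrr.
  rewrite (binom2_le1 (_ - (r%:Z + 1))); last lia.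
  rewrite (binom2_le1 (_ - (r + q + 1)%N%:Z)); last lia.
  rewrite (binom2_le1 (_ - ((r + q + 1)%N%:Z + 1))); last lia.
  by rewrite !mulr0 !subr0.
rewrite big_nat_recr //=.
have e : forall x : int, (r + n.+1)%N%:Z + 2 - x = ((r + n)%N%:Z + 2 - x) + 1 by move=> x; lia.
rewrite !e !binom2S.
have step : t%:Z * pos_part ((r + n)%N%:Z + 2 - (r%:Z + 1))
   - (s - rr - 1)%N%:Z * pos_part ((r + n)%N%:Z + 2 - (r + q + 1)%N%:Z)
   - (rr + 1)%N%:Z * pos_part ((r + n)%N%:Z + 2 - ((r + q + 1)%N%:Z + 1))
   = pos_part ((r + n)%N%:Z + 2) - pos_part (r%:Z + n.+1%:Z + 1 - n.+1%:Z * t%:Z).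
  rewrite pp_pos; last lia.
  rewrite (pp_pos ((r + n)%N%:Z + 2)); last lia.
  case: (leqP n.+1 q) => hnq.
    have h1 : (n.+1 * s <= q * s)%N by rewrite leq_mul2r hnq orbT.
    rewrite pp_neg; last nia. rewrite pp_neg; last nia.
    rewrite pp_pos; last nia. nia.
  have h1 : (q.+1 * s <= n.+1 * s)%N by rewrite leq_mul2r hnq orbT.
  rewrite pp_pos; last nia. rewrite pp_pos; last nia.
  rewrite pp_neg; last nia. nia.
have e2 : (r + n.+1)%N%:Z + 2 = ((r + n)%N%:Z + 2) + 1 by lia.
rewrite e2 binom2S; exact: comb.
Qed.
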